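(* The hyperplane $S_\gamma^\perp$ of $\Sigma$ meets $\Pi$ in a solid $\Pi\cap S_\gamma^\perp$ such that $\Pi\cap S_\gamma^\perp\cap\mathcal Q$ is an elliptic quadric of that solid. Moreover the stabilizer of $S_\gamma$ in $G$ has order $q^2+1$, and $|S_\gamma^G|=q^2(q^2-1)$.
   Context: Let $q$ be an even prime power and $\mathrm{PG}(5,q^2)$ have homogeneous coordinates $(X_1,\dots,X_6)$, points written as column vectors. Let $\Sigma$ be the set of points having a coordinate vector $(\alpha,\alpha^q,\delta_0,\beta,\beta^q,\delta_1)$ with $\alpha,\beta\in\mathbb F_{q^2}$, $\delta_0,\delta_1\in\mathbb F_q$ (a Baer subgeometry $\cong\mathrm{PG}(5,q)$). Let $\Pi=\Sigma\cap\{X_6=0\}$ (a hyperplane of $\Sigma$), $\mathcal Q=\Sigma\cap\{X_6=0,\ X_3^2+X_1X_5+X_2X_4=0\}=\{(\alpha,\alpha^q,\sqrt{\alpha\beta^q+\alpha^q\beta},\beta,\beta^q,0)\}$ (a parabolic quadric $\mathcal Q(4,q)$ of $\Pi$) with nucleus $N=(0,0,1,0,0,0)$. Fix $\omega\in\mathbb F_{q^2}\setminus\mathbb F_q$ with $\omega+\omega^q=1$ and let $h(X,Y)=\omega X_1Y_4^q+\omega^qX_1Y_6^q+\omega^qX_2Y_5^q+\omega X_2Y_6^q+X_3Y_6^q+\omega^qX_4Y_1^q+\omega X_5Y_2^q+\omega X_6Y_1^q+\omega^qX_6Y_2^q+X_6Y_3^q$ (Hermitian form of a Hermitian variety $\mathcal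 H(5,q^2)$ containing $\Sigma$). Restricted to $\Sigma$, $P\perp R\iff h(P,R)=0$ defines a symplectic polarity $\perp$ of $\Sigma$; $\mathcal W(5,q)$ is the associated symplectic polar space (so $N^\perp=\Pi$). For $a,b,c,d\in\mathbb F_{q^2}$ with $ad+bc=1$ let $M_{a,b,c,d}$ be the $6\times6$ matrix with rows $(a^2,0,0,0,c^2,\tfrac{c(a+c\omega^q)}{\omega})$, $(0,a^{2q},0,c^{2q},0,\tfrac{c^q(a^q+c^q\omega)}{\omega^q})$, $(ab,a^qb^q,1,c^qd^q,cd,\tfrac{d(a+c\omega^q)}{\omega}+\tfrac{d^q(a^q+c^q\omega)}{\omega^q}+\tfrac{1}{\omega^{q+1}})$, $(0,b^{2q},0,d^{2q},0,\tfrac{d^q(b^q+d^q\omega)+\omega}{\omega^q})$, $(b^2,0,0,0,d^2,\tfrac{d(b+d\omega^q)+\omega^q}{\omega})$, $(0,0,0,0,0,1)$, and let $G\cong\mathrm{PSL}(2,q^2)$ be the group of projectivities $X\mapsto M_{a,b,c,d}X$; $G$ stabilizes $\Sigma,\Pi,\mathcal Q,N$ and the polarity $\perp$. Fix $\gamma\in\mathbb F_{q^2}$ with $X^2+X+\gamma$ irreducible over $\mathbb F_{q^2}$ and let $S_\gamma=\left(\frac{\gamma}{\omega},\frac{\gamma^q}{\omega^q},\frac{\omega^q\gamma}{\omega}+\frac{\omega\gamma^q}{\omega^q},1,1,1\right)\in\Sigma$; $S_\gamma^G$ is its $G$-orbit. *)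

(* Defs.v *)
From HB Require Import structures.
From mathcomp Require Import all_boot all_order all_algebra all_field.
Set Implicit Arguments. Unset Strict Implicit. Unset Printing Implicit Defensive.
Import Order.TTheory GRing.Theory Num.Theory.
Local Open Scope ring_scope.

Section Defs.
Variable F : finFieldType.
Variable q : nat.      (* F = F_{q^2}, conjugation x |-> x^q *)
Variable w : F.

Definition inFq (x : F) : bool := x ^+ q == x.

(* 1-based coordinate X_i of a column vector *)
Definition crd (v : 'cV[F]_6) (i : nat) : F := v (@inord 5 i.-1) ord0.

Definition hform (X Y : 'cV[F]_6) : F :=
  let c x := x ^+ q in
  w * crd X 1 * c (crd Y 4) + c w * crd X 1 * c (crd Y 6)
  + c w * crd X 2 * c (crd Y 5) + w * crd X 2 * c (crd Y 6)
  + crd X 3 * c (crd Y 6) + c w * crd X 4 * c (crd Y 1)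
  + w * crd X 5 * c (crd Y 2) + w * crd X 6 * c (crd Y 1)
  + c w * crd X 6 * c (crd Y 2) + crd X 6 * c (crd Y 3).

Definition inV (v : 'cV[F]_6) : bool :=
  [&& crd v 2 == crd v 1 ^+ q, crd v 5 == crd v 4 ^+ q,
      inFq (crd v 3) & inFq (crd v 6)].

(* the point <v> of PG(5,q^2) belongs to the Baer subgeometry Sigma *)
Definition inSigma (v : 'cV[F]_6) : Prop :=
  v != 0 /\ exists k : F, k != 0 /\ inV (k *: v).

Definition inPi (v : 'cV[F]_6) : Prop := inSigma v /\ crd v 6 = 0.

Definition inQ (v : 'cV[F]_6) : Prop :=
  inPi v /\ crd v 3 ^+ 2 + crd v 1 * crd v 5 + crd v 2 * crd v 4 = 0.

Definition inPerp (P v : 'cV[F]_6) : Prop := inSigma v /\ hform P v = 0.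

(* entries of the matrix M_{a,b,c,d} (0-based row i, column j) *)
Definition Mentry (a b c d : F) (i j : nat) : F :=
  let cj x := x ^+ q in
  match i, j with
  | 0, 0 => a ^+ 2
  | 0, 4 => c ^+ 2
  | 0, 5 => c * (a + c * cj w) / w
  | 1, 1 => cj a ^+ 2
  | 1, 3 => cj c ^+ 2
  | 1, 5 => cj c * (cj a + cj c * w) / cj w
  | 2, 0 => a * b
  | 2, 1 => cj a * cj b
  | 2, 2 => 1
  | 2, 3 => cj c * cj d
  | 2, 4 => c * d
  | 2, 5 => d * (a + c * cj w) / w + cj d * (cj a + cj c * w) / cj w
            + 1 / (w ^+ q.+1)
  | 3, 1 => cj b ^+ 2
  | 3, 3 => cj d ^+ 2
  | 3, 5 => (cj d * (cj b + cj d * w) + w) / cj w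
  | 4, 0 => b ^+ 2
  | 4, 4 => d ^+ 2
  | 4, 5 => (d * (b + d * cj w) + cj w) / w
  | 5, 5 => 1
  | _, _ => 0
  end.

Definition Mabcd (a b c d : F) : 'M[F]_6 :=
  \matrix_(i < 6, j < 6) Mentry a b c d i j.

(* the group G ~ PSL(2,q^2) as a set of matrices; since every M_{a,b,c,d}
   has last row (0,...,0,1), distinct matrices give distinct projectivities *)
Definition Gset : {set 'M[F]_6} :=
  [set g | [exists a : F, exists b : F, exists c : F, exists d : F,
            (a * d + b * c == 1) && (g == Mabcd a b c d)]].

(* canonical representation of the projective point <v> : its row space *)
Definition ppt (v : 'cV[F]_6) : 'M[F]_6 := (<< v^T >>)%MS.

Definition Sgamma (g : F) : 'cV[F]_6 :=
  \col_(i < 6) (match val i with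
                | 0 => g / w
                | 1 => g ^+ q / w ^+ q
                | 2 => w ^+ q * g / w + w * g ^+ q / w ^+ q
                | _ => 1 end).

(* Elliptic quadric of a solid of Sigma, in canonical form:
   the solid is the set of points <U lam>, lam in F_q^4 \ 0, where the
   columns of U lie in the F_q-form V of Sigma and are F_q-independent;
   in these coordinates the point set is V(X0 X1 + a X2^2 + b X2 X3 + c X3^2)
   with a X^2 + b XY + c Y^2 irreducible (anisotropic) over F_q. *)
Definition FqVec (lam : 'cV[F]_4) : bool := [forall i, inFq (lam i ord0)].

Definition solid_basis (U : 'M[F]_(6,4)) : Prop :=
  (forall j, inV (col j U)) /\
  (forall lam : 'cV[F]_4, FqVec lam -> U *m lam = 0 -> lam = 0).

Definition is_solid_of_Sigma (A : 'cV[F]_6 -> Prop) (U : 'M[F]_(6,4)) : Prop :=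
  solid_basis U /\
  forall v : 'cV[F]_6,
    A v <-> exists lam : 'cV[F]_4,
      [/\ FqVec lam, lam != 0 & exists k : F, k != 0 /\ v = k *: (U *m lam)].

Definition is_elliptic_quadric_in (U : 'M[F]_(6,4)) (B : 'cV[F]_6 -> Prop)
  : Prop :=
  exists a b c : F,
    [/\ inFq a, inFq b, inFq c,
        (forall x y : F, inFq x -> inFq y -> (x != 0) || (y != 0) ->
            a * x ^+ 2 + b * x * y + c * y ^+ 2 != 0) &
        forall lam : 'cV[F]_4, FqVec lam -> lam != 0 ->
          (B (U *m lam) <->
           lam 0 0 * lam 1 0 + a * lam 2 0 ^+ 2 + b * lam 2 0 * lam 3 0
           + c * lam 3 0 ^+ 2 = 0)].

End Defs.

(* Main.v *)
Require Import Defs.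
From HB Require Import structures.
From mathcomp Require Import all_boot all_order all_algebra all_field.
From mathcomp Require Import ring.
Import Order.TTheory GRing.Theory Num.Theory.
Local Open Scope ring_scope.
Set Implicit Arguments. Unset Strict Implicit. Unset Printing Implicit Defensive.

Section Main.
Variables (F : finFieldType) (q : nat) (w g : F).
Hypothesis pchar2 : 2%N \in [pchar F].
Hypothesis qnat : (GRing.pchar F).-nat q.
Hypothesis Hcard : #|F| = (q ^ 2)%N.
Hypothesis Hw : w + w ^+ q = 1.
Hypothesis Hwq : w ^+ q != w.
Hypothesis Hg : forall x : F, x ^+ 2 + x + g != 0.

Local Notation cj x := (x ^+ q).

Lemma two0 : 2%:R = 0 :> F.
Proof. exact: pcharf0 pchar2. Qed.

Lemma c2eq (x y z : F) : x = y + 2%:R * z -> x = y.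
Proof. by rewrite two0 mul0r addr0. Qed.

Lemma q_gt0 : (0 < q)%N.
Proof. by move: qnat; rewrite /pnat => /andP[]. Qed.

Lemma cjD (x y : F) : cj (x + y) = cj x + cj y.
Proof. exact: exprDn_pchar. Qed.
Lemma cjM (x y : F) : cj (x * y) = cj x * cj y.
Proof. exact: exprMn. Qed.
Lemma cj1 : (1 : F) ^+ q = 1.
Proof. exact: expr1n. Qed.
Lemma cj0 : (0 : F) ^+ q = 0.
Proof. by rewrite expr0n eqn0Ngt q_gt0. Qed.
Lemma cjK (x : F) : cj (cj x) = x.
Proof. by rewrite -exprM mulnn -Hcard expf_card. Qed.
Lemma cjV (x : F) : cj (x^-1) = (cj x)^-1.
Proof. exact: exprVn. Qed.
Lemma cjN (x : F) : cj (- x) = - cj x.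
Proof. by rewrite !oppr_pchar2. Qed.
Lemma cjX (x : F) n : cj (x ^+ n) = (cj x) ^+ n.
Proof. by rewrite -!exprM mulnC. Qed.
Lemma cjn n : (n%:R : F) ^+ q = n%:R.
Proof. by elim: n => [|n IH]; rewrite ?cj0 // -addn1 !natrD cjD IH cj1. Qed.
Lemma cjB (x y : F) : cj (x / y) = cj x / cj y.
Proof. by rewrite cjM cjV. Qed.

Lemma oppF (x : F) : - x = x.
Proof. exact: oppr_pchar2. Qed.

Lemma cjw : cj w = 1 - w.
Proof. by rewrite -Hw addrC addKr. Qed.

Lemma w_neq0 : w != 0.
Proof. apply: contraNneq Hwq => ->; by rewrite cj0. Qed.
Lemma cjw_neq0 : cj w != 0.
Proof. by rewrite expf_eq0 (negPf w_neq0) andbF. Qed.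
Lemma cjx_eq0 (x : F) : (cj x == 0) = (x == 0).
Proof. by rewrite expf_eq0 q_gt0. Qed.

Lemma sq_inj : injective (fun x : F => x ^+ 2).
Proof.
move=> x y /= Hxy; apply/eqP; rewrite -subr_eq0 -[_ == 0](@andTb) -[true](isT : (0 < 2)%N) -expf_eq0.
have -> : (x - y) ^+ 2 = x ^+ 2 - y ^+ 2 + 2%:R * (y ^+ 2 - x * y) by ring.
by rewrite Hxy subrr two0 mul0r addr0.
Qed.

Definition mk6 (x1 x2 x3 x4 x5 x6 : F) : 'cV[F]_6 :=
  \col_(i < 6) nth 0 [:: x1; x2; x3; x4; x5; x6] i.

Lemma crd_mk6 x1 x2 x3 x4 x5 x6 k : (k < 6)%N ->
  crd (mk6 x1 x2 x3 x4 x5 x6) k.+1 = nth 0 [:: x1; x2; x3; x4; x5; x6] k.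
Proof. by move=> Hk; rewrite /crd /mk6 !mxE inordK. Qed.

Lemma mk6_crd (v : 'cV[F]_6) :
  v = mk6 (crd v 1) (crd v 2) (crd v 3) (crd v 4) (crd v 5) (crd v 6).
Proof.
apply/matrixP=> i j; rewrite ord1 /mk6 /crd mxE.
by case: i => [[|[|[|[|[|[|//]]]]]] Hi] /=; congr (v _ _); apply: val_inj; rewrite /= inordK.
Qed.

Lemma mk6_eq x1 x2 x3 x4 x5 x6 y1 y2 y3 y4 y5 y6 :
  x1 = y1 -> x2 = y2 -> x3 = y3 -> x4 = y4 -> x5 = y5 -> x6 = y6 ->
  mk6 x1 x2 x3 x4 x5 x6 = mk6 y1 y2 y3 y4 y5 y6.
Proof. by move=> -> -> -> -> -> ->. Qed.

Lemma mk6_inj x1 x2 x3 x4 x5 x6 y1 y2 y3 y4 y5 y6 :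
  mk6 x1 x2 x3 x4 x5 x6 = mk6 y1 y2 y3 y4 y5 y6 ->
  x1 = y1 /\ x2 = y2 /\ x3 = y3 /\ x4 = y4 /\ x5 = y5 /\ x6 = y6.
Proof.
move=> E; have: forall k, (k < 6)%N -> crd (mk6 x1 x2 x3 x4 x5 x6) k.+1 = crd (mk6 y1 y2 y3 y4 y5 y6) k.+1.
  by rewrite E.
move=> H; have := H 0%N isT; have := H 1%N isT; have := H 2%N isT; have := H 3%N isT;
  have := H 4%N isT; have := H 5%N isT; rewrite !crd_mk6 //=.
Qed.

Lemma mk6_0 : mk6 0 0 0 0 0 0 = 0.
Proof. by apply/matrixP=> i j; rewrite !mxE; case: i => [[|[|[|[|[|[|//]]]]]] Hi]. Qed.

Lemma scale_mk6 k x1 x2 x3 x4 x5 x6 :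
  k *: mk6 x1 x2 x3 x4 x5 x6 = mk6 (k * x1) (k * x2) (k * x3) (k * x4) (k * x5) (k * x6).
Proof.
apply/matrixP=> i j; rewrite !mxE.
by case: i => [[|[|[|[|[|[|//]]]]]] Hi].
Qed.

Lemma inV_mk6 x1 x2 x3 x4 x5 x6 :
  inV q (mk6 x1 x2 x3 x4 x5 x6) = [&& x2 == cj x1, x5 == cj x4, cj x3 == x3 & cj x6 == x6].
Proof. by rewrite /inV /inFq !crd_mk6. Qed.

Lemma hform_mk6 x1 x2 x3 x4 x5 x6 y1 y2 y3 y4 y5 y6 :
  hform q w (mk6 x1 x2 x3 x4 x5 x6) (mk6 y1 y2 y3 y4 y5 y6) =
  w * x1 * cj y4 + cj w * x1 * cj y6
  + cj w * x2 * cj y5 + w * x2 * cj y6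
  + x3 * cj y6 + cj w * x4 * cj y1
  + w * x5 * cj y2 + w * x6 * cj y1
  + cj w * x6 * cj y2 + x6 * cj y3.
Proof.
by rewrite /hform !crd_mk6.
Qed.

Definition S3 := cj w * g / w + w * cj g / cj w.

Lemma Sg_mk6 : Sgamma q w g = mk6 (g / w) (cj g / cj w) S3 1 1 1.
Proof.
by apply/matrixP=> i j; rewrite !mxE; case: i => [[|[|[|[|[|[|//]]]]]] Hi].
Qed.

Lemma MS_mk6 a b c d y1 y2 y3 y4 y5 y6 :
  Mabcd q w a b c d *m mk6 y1 y2 y3 y4 y5 y6 =
  mk6 (a ^+ 2 * y1 + c ^+ 2 * y5 + c * (a + c * cj w) / w * y6)
      (cj a ^+ 2 * y2 + cj c ^+ 2 * y4 + cj c * (cj a + cj c * w) / cj w * y6)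
      (a * b * y1 + cj a * cj b * y2 + y3 + cj c * cj d * y4 + c * d * y5
       + (d * (a + c * cj w) / w + cj d * (cj a + cj c * w) / cj w
          + 1 / (w ^+ q.+1)) * y6)
      (cj b ^+ 2 * y2 + cj d ^+ 2 * y4 + (cj d * (cj b + cj d * w) + w) / cj w * y6)
      (b ^+ 2 * y1 + d ^+ 2 * y5 + (d * (b + d * cj w) + cj w) / w * y6)
      y6.
Proof.
apply/matrixP=> i j; rewrite !mxE !big_ord_recl big_ord0 /= !mxE /=.
by case: i => [[|[|[|[|[|[|//]]]]]] Hi] /=; ring.
Qed.

Definition Qf (x y : F) := g * x ^+ 2 + x * y + y ^+ 2.

Definition Vec (n1 n2 e : F) :=
  mk6 (n1 / w) (cj (n1 / w)) (S3 + e / w + cj (e / w))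
      (cj ((n2 + cj w) / w)) ((n2 + cj w) / w) 1.

Lemma omw_neq0 : 1 - w != 0.
Proof. by rewrite -cjw cjw_neq0. Qed.

Lemma bc_eq (a b c d : F) : a * d + b * c = 1 -> b * c = a * d + 1.
Proof.
move=> H; apply: (c2eq (z := - (a * d))).
have -> : a * d + 1 + 2%:R * (- (a * d)) = 1 - a * d by ring.
by rewrite -H; ring.
Qed.

Lemma MS_Vec (a b c d : F) : a * d + b * c = 1 ->
  Mabcd q w a b c d *m Sgamma q w g = Vec (Qf a c) (Qf b d) (a * b * g + b * c + c * d).
Proof.
move=> H; have Hn := w_neq0; have Hn' := omw_neq0.
rewrite Sg_mk6 MS_mk6 /Vec /Qf /S3; apply: mk6_eq.
- by rewrite cjw; field.
- by rewrite !(cjB, cjD, cjM, cjX) ?cjK cjw; field.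
- rewrite (bc_eq H) exprS !(cjB, cjD, cjM, cjX) ?cjK ?cj1 cjw; field.
  by rewrite Hn Hn'.
- by rewrite !(cjB, cjD, cjM, cjX) ?cjK cjw; field.
- by rewrite cjw; field.
- by [].
Qed.

Lemma ppt_eq1 (u v : 'cV[F]_6) : crd u 6 = 1 -> crd v 6 = 1 ->
  (ppt u == ppt v) = (u == v).
Proof.
move=> hu hv; apply/eqP/eqP => [E|->//].
have /andP[/submxP[D HD] _] : (u^T == v^T)%MS by apply/genmxP.
have Hi : forall i, u i 0 = D 0 0 * v i 0.
  move=> i; have := congr1 (fun M : 'M[F]_(1,6) => M 0 i) HD.
  by rewrite !mxE big_ord1 !mxE.
have D1 : D 0 0 = 1 by move: hu; rewrite /crd Hi -/(crd v 6) hv mulr1.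
by apply/matrixP => i j; rewrite ord1 Hi D1 mul1r.
Qed.

Lemma Vec6 n1 n2 e : crd (Vec n1 n2 e) 6 = 1.
Proof. by rewrite /Vec crd_mk6. Qed.

Lemma one_cjw : 1 + cj w = w.
Proof. by apply: (c2eq (z := cj w)); rewrite -{1}Hw; ring. Qed.

Lemma S_Vec : Sgamma q w g = Vec g 1 0.
Proof.
have Hn := w_neq0; rewrite Sg_mk6 /Vec; apply: mk6_eq.
- by [].
- by rewrite cjB.
- by rewrite mul0r cj0 !addr0.
- by rewrite one_cjw divff // cj1.
- by rewrite one_cjw divff.
- by [].
Qed.

Definition Tr (x : F) := x + cj x.

Lemma TrD x y : Tr (x + y) = Tr x + Tr y.
Proof. by rewrite /Tr cjD; ring. Qed.

Lemma tr1w : Tr (1 / w) != 0.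
Proof.
have Hn := w_neq0; have Hn' := omw_neq0.
rewrite /Tr cjB cj1 cjw.
have -> : 1 / w + 1 / (1 - w) = (w * (1 - w))^-1 by field; rewrite ?Hn ?Hn'.
by rewrite invr_eq0 mulf_neq0.
Qed.

Lemma Qprod (a b c d : F) : a * d + b * c = 1 ->
  Qf a c * Qf b d = (a * b * g + b * c + c * d) ^+ 2 + (a * b * g + b * c + c * d) + g.
Proof.
move=> H.
have -> : Qf a c * Qf b d = (a * b * g + b * c + c * d) ^+ 2
   + (a * b * g + b * c + c * d) * (a * d - b * c) + g * (a * d - b * c) ^+ 2.
  by rewrite /Qf; ring.
by rewrite oppF H mulr1 expr1n mulr1.
Qed.

Lemma Qf_neq0 (x y : F) : (x != 0) || (y != 0) -> Qf x y != 0.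
Proof.
have [->|x0] := eqVneq x 0 => /= H.
  by rewrite /Qf expr0n /= mulr0 mul0r !add0r expf_neq0.
have -> : Qf x y = x ^+ 2 * ((y / x) ^+ 2 + (y / x) + g) by rewrite /Qf; field.
by rewrite mulf_neq0 ?expf_neq0 ?Hg.
Qed.

Lemma AS0 (e : F) : e ^+ 2 + e = 0 -> (e = 0) \/ (e = 1).
Proof.
move=> H; have : e * (e + 1) = 0 by rewrite -H; ring.
move/eqP; rewrite mulf_eq0 => /orP[/eqP->|]; first by left.
by rewrite addr_eq0 oppF => /eqP->; right.
Qed.

Lemma AS_eq (e e' : F) : e ^+ 2 + e = e' ^+ 2 + e' -> (e' = e) \/ (e' = e + 1).
Proof.
move=> H; have : (e' - e) ^+ 2 + (e' - e) = 0.
  apply: (c2eq (z := e * e - e' * e)); rewrite add0r.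
  apply/eqP; rewrite -subr_eq0; apply/eqP.
  have -> : (e' - e) ^+ 2 + (e' - e) - 2%:R * (e * e - e' * e)
          = (e' ^+ 2 + e') - (e ^+ 2 + e) by ring.
  by rewrite H subrr.
case/AS0 => /eqP; rewrite subr_eq => /eqP ->; [left|right]; ring.
Qed.

Lemma Gset_memP (m : 'M[F]_6) :
  reflect (exists a b c d, a * d + b * c = 1 /\ m = Mabcd q w a b c d) (m \in Gset q w).
Proof.
rewrite inE; apply: (iffP idP).
  case/existsP=> a /existsP[b /existsP[c /existsP[d /andP[/eqP H /eqP ->]]]].
  by exists a, b, c, d.
move=> [a [b [c [d [H ->]]]]]; apply/existsP; exists a; apply/existsP; exists b.
by apply/existsP; exists c; apply/existsP; exists d; rewrite H !eqxx.
Qed.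

Lemma Ment (a b c d : F) :
  Mabcd q w a b c d (inord 4) (inord 0) = b ^+ 2 /\
  Mabcd q w a b c d (inord 4) (inord 4) = d ^+ 2.
Proof. by rewrite !mxE !inordK. Qed.

Lemma Mabcd_inj (a b c d a' b' c' d' : F) :
  Mabcd q w a b c d = Mabcd q w a' b' c' d' -> b = b' /\ d = d'.
Proof.
move=> E; have [h1 h2] := Ment a b c d; have [h1' h2'] := Ment a' b' c' d'.
by split; apply: sq_inj; rewrite /= -?h1 -?h2 -?h1' -?h2' E.
Qed.

Definition psi (x : F * F) := Mabcd q w (x.1 + x.2) x.1 (x.1 * g) x.2.
Definition Dset := [set x : F * F | Qf x.1 x.2 == 1].

Lemma psi_inj : injective psi.
Proof. by move=> [b d] [b' d'] /Mabcd_inj /= [-> ->]. Qed.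

Lemma St_eq :
  [set m in Gset q w | ppt (m *m Sgamma q w g) == ppt (Sgamma q w g)] = psi @: Dset.
Proof.
apply/setP => m; apply/idP/idP.
  case/setIdP => /Gset_memP [a [b [c [d [H ->]]]]].
  rewrite MS_Vec // S_Vec ppt_eq1 ?Vec6 //.
  move=> /eqP /mk6_inj [E1 [_ [E3 [_ [E5 _]]]]].
  have Hn := w_neq0.
  have Q1 : Qf a c = g.
    by move: E1 => /(congr1 (fun x => x * w)) /=; rewrite !divfK ?w_neq0.
  have Q2 : Qf b d = 1.
    by move: E5 => /(congr1 (fun x => x * w - cj w)) /=; rewrite !divfK ?w_neq0 // !addrK.
  set e := a * b * g + b * c + c * d in E3.
  have Te : Tr (e / w) = 0.
    by move: E3; rewrite mul0r cj0 !addr0 -addrA -{2}[S3]addr0 => /addrI HT; exact: HT.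
  have He : e ^+ 2 + e = 0.
    have := Qprod H; rewrite Q1 Q2 mulr1 -/e => /eqP.
    by rewrite eq_sym -subr_eq0 addrK => /eqP.
  have e0 : e = 0.
    case: (AS0 He) => // e1; move: Te; rewrite e1 => /eqP.
    by rewrite (negPf tr1w).
  have Ea : a = b + d.
    have -> : a = a * Qf b d by rewrite Q2 mulr1.
    apply: (c2eq (z := - (b * b * c + b * c * d))).
    have -> : b + d = (b + d) * (a * d + b * c) + b * e by rewrite H e0; ring.
    by rewrite /e /Qf; ring.
  have Ec : c = b * g.
    have -> : c = c * Qf b d by rewrite Q2 mulr1.
    apply: (c2eq (z := - (a * b * d * g))).
    have -> : b * g = b * g * (a * d + b * c) + d * e by rewrite H e0; ring.
    by rewrite /e /Qf; ring.
  apply/imsetP; exists (b, d); first by rewrite /Dset inE /= Q2.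
  by rewrite /psi /= -Ea -Ec.
case/imsetP => [[b d]]; rewrite /Dset inE /= => /eqP Q2 ->.
have H : (b + d) * d + b * (b * g) = 1.
  by rewrite -Q2 /Qf; ring.
apply/setIdP; split.
  by apply/Gset_memP; exists (b + d), b, (b * g), d.
rewrite /psi /= MS_Vec // S_Vec; apply/eqP; congr ppt; congr Vec.
- have -> : Qf (b + d) (b * g) = g * Qf b d + 2%:R * (g * (b * b + b * d)) by rewrite /Qf; ring.
  by rewrite Q2 mulr1 two0 mul0r addr0.
- exact: Q2.
- apply: (c2eq (z := b * b * g + b * d * g)); ring.
Qed.

Lemma card_St :
  #|[set m in Gset q w | ppt (m *m Sgamma q w g) == ppt (Sgamma q w g)]| = (q ^ 2 + 1)%N.
Proof.
rewrite St_eq (card_imset _ psi_inj).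
have [sr srK1 srK2] := injF_bij sq_inj.
pose r (t : F) := sr (g + t + t ^+ 2)^-1.
pose rho (t : F) := (r t, r t * t).
have nz t : g + t + t ^+ 2 != 0.
  by have -> : g + t + t ^+ 2 = t ^+ 2 + t + g by ring.

have r2 t : r t ^+ 2 = (g + t + t ^+ 2)^-1 by exact: srK2.
have rnz t : r t != 0.
  by apply/eqP => r0; move: (r2 t); rewrite r0 expr0n /= => /esym /eqP; rewrite invr_eq0 (negPf (nz t)).
have rho_inj : injective rho.
  move=> t t' [E1 E2]; move: E2; rewrite E1 => /mulfI; exact.
have -> : Dset = (0, 1) |: (rho @: [set: F]).
  apply/setP => [[b d]]; rewrite !inE /=; apply/idP/idP.
    move=> /eqP Q2; have [b0|b0] := eqVneq b 0.
      rewrite b0 /= in Q2 *.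
      have d1 : d = 1.
        apply: sq_inj; move: Q2; rewrite /Qf expr0n /= mulr0 mul0r !add0r => /= ->.
        by rewrite expr1n.
      by rewrite d1 eqxx.
    apply/orP; right; apply/imsetP; exists (d / b) => //.
    have Eb : sr (g + d / b + (d / b) ^+ 2)^-1 = b.
      have -> : (g + d / b + (d / b) ^+ 2)^-1 = b ^+ 2.
        apply: (canLR (@invrK _)); rewrite -[RHS]mul1r -Q2 /Qf.
        by field.
      by rewrite srK1.
    by rewrite /rho /r Eb mulrC divfK.
  case/orP => [/eqP [-> ->]|/imsetP [t _ [-> ->]]].
    by rewrite /Qf expr0n /= mulr0 mul0r !add0r expr1n.
  rewrite /Qf; apply/eqP.
  have -> : g * r t ^+ 2 + r t * (r t * t) + (r t * t) ^+ 2 = r t ^+ 2 * (g + t + t ^+ 2) by ring.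
  by rewrite r2 mulVf.
rewrite cardsU1 (card_imset _ rho_inj) cardsT Hcard.
have -> : (0, 1) \notin rho @: [set: F].
  apply/imsetP => [[t _ [E _]]]; by move: (rnz t); rewrite -E eqxx.
by rewrite addnC.
Qed.

Definition phi (x : F * F) :=
  ppt (Mabcd q w (x.1^-1) 0 (x.2 / x.1) x.1 *m Sgamma q w g).
Definition Pset := [set x : F * F | x.1 != 0].

Lemma phiE (s e : F) : s != 0 ->
  Mabcd q w (s^-1) 0 (e / s) s *m Sgamma q w g = Vec ((g + e + e ^+ 2) / s ^+ 2) (s ^+ 2) e.
Proof.
move=> s0; rewrite MS_Vec; last by rewrite mul0r addr0 mulVf.
congr Vec; rewrite /Qf; first by field.
  by rewrite expr0n /= mulr0 mul0r !add0r.
by field.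
Qed.

Lemma Orb_eq : [set ppt (m *m Sgamma q w g) | m in Gset q w] = phi @: Pset.
Proof.
have [sr srK1 srK2] := injF_bij sq_inj.
apply/setP => p; apply/idP/idP.
  case/imsetP => m /Gset_memP [a [b [c [d [H ->]]]]] ->.
  have bd : (b != 0) || (d != 0).
    apply: contraT; rewrite negb_or !negbK => /andP[/eqP b0 /eqP d0].
    by move: H; rewrite b0 d0 mulr0 mul0r addr0 => /eqP; rewrite eq_sym oner_eq0.
  have n2 := Qf_neq0 bd.
  set s := sr (Qf b d).
  have s2 : s ^+ 2 = Qf b d by exact: srK2.
  have s0 : s != 0 by apply/eqP => s0; move: n2; rewrite -s2 s0 expr0n eqxx.
  set e := a * b * g + b * c + c * d.
  apply/imsetP; exists (s, e); first by rewrite inE /=.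
  rewrite /phi /= phiE // MS_Vec //; congr ppt; congr Vec => //.
  have -> : g + e + e ^+ 2 = Qf a c * Qf b d by rewrite Qprod //; rewrite /e; ring.
  by rewrite s2 mulfK.
case/imsetP => [[s e]]; rewrite inE /= => s0 ->.
apply/imsetP; exists (Mabcd q w (s^-1) 0 (e / s) s) => //.
by apply/Gset_memP; exists (s^-1), 0, (e / s), s; rewrite mul0r addr0 mulVf.
Qed.

Lemma phi_inj : {in Pset &, injective phi}.
Proof.
move=> [s e] [s' e']; rewrite !inE /= => s0 s0'; rewrite /phi /= !phiE //.
move/eqP; rewrite ppt_eq1 ?Vec6 // => /eqP /mk6_inj [E1 [_ [E3 [_ [E5 _]]]]].
have Hn := w_neq0.
have ss : s = s'.
  apply: sq_inj; move: E5 => /(congr1 (fun x => x * w - cj w)) /=.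
  by rewrite !divfK ?w_neq0 // !addrK.
rewrite -ss in E1 *.
have Ee : e ^+ 2 + e = e' ^+ 2 + e'.
  move: E1 => /(congr1 (fun x => x * w * s ^+ 2 - g)) /=.
  rewrite !divfK ?w_neq0 ?expf_neq0 // => E.
  have -> : e ^+ 2 + e = g + e + e ^+ 2 - g by ring.
  by rewrite E; ring.
have Te : Tr (e / w) = Tr (e' / w).
  by move: E3; rewrite -!addrA => /addrI /addrI HT; exact: HT.
case: (AS_eq Ee) => [-> //|E'].
move: Te; rewrite E' mulrDl TrD -{1}[Tr (e / w)]addr0 => /addrI /eqP.
by rewrite eq_sym (negPf tr1w).
Qed.

Lemma card_Orb : #|[set ppt (m *m Sgamma q w g) | m in Gset q w]| = (q ^ 2 * (q ^ 2 - 1))%N.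
Proof.
rewrite Orb_eq (card_in_imset phi_inj).
have -> : Pset = setX [set~ (0 : F)] [set: F].
  by apply/setP => [[s e]]; rewrite /Pset !inE andbT.
by rewrite cardsX cardsC1 cardsT Hcard mulnC subn1.
Qed.

Definition AS (x : F) := x ^+ 2 + x.

Lemma ASD (x y : F) : AS (x + y) = AS x + AS y.
Proof. by apply: (c2eq (z := x * y)); rewrite /AS; ring. Qed.

Lemma cjw1 : cj w = 1 + w.
Proof. by rewrite cjw oppF. Qed.

Lemma ASw : AS w = w * cj w.
Proof. by rewrite /AS cjw1; ring. Qed.

Lemma c2sol (a b : F) : a + b = 0 -> a = b.
Proof. by move/eqP; rewrite addr_eq0 oppF => /eqP. Qed.

Lemma AS_Fq (mu : F) : cj mu = mu -> exists r : F, AS r = mu.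
Proof.
move=> Hmu.
pose R := [set x : F | cj x == x].
pose A := [set AS x | x in R].
pose N := w * cj w.
pose B := [set a + N | a in A].
have cjAS x : cj (AS x) = AS (cj x) by rewrite /AS cjD cjX.
have cjN : cj N = N by rewrite /N cjM cjK mulrC.
have AR : A \subset R.
  by apply/subsetP => a /imsetP [x]; rewrite inE => /eqP xR ->; rewrite inE cjAS xR.
have BR : B \subset R.
  apply/subsetP => b /imsetP [a aA ->]; have := subsetP AR a aA.
  by rewrite !inE cjD cjN => /eqP ->.
have dAB : [disjoint A & B].
  apply/pred0P => z /=; apply/negP => /andP[/imsetP [x xR ->] /imsetP [a /imsetP [y yR ->] E]].
  move: xR yR; rewrite !inE => /eqP xR /eqP yR.
  have E0 : AS (x + y + w) = 0.
    rewrite !ASD E ASw -/N.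
    apply: (c2eq (z := AS y + N)); rewrite add0r; ring.
  have [E1|E1] : x + y + w = 0 \/ x + y + w = 1 by apply: AS0.
    move: Hwq; rewrite -(c2sol E1).
    by rewrite cjD xR yR eqxx.
  have E2 : (x + y + 1) + w = 0.
    by rewrite (_ : x + y + 1 + w = (x + y + w) + 1); [rewrite E1 -mulr2n two0|ring].
  move: Hwq; rewrite -(c2sol E2).
  by rewrite !cjD xR yR cj1 eqxx.
pose rho a := odflt 0 [pick x in R | AS x == a].
have RS : R \subset (rho @: A) :|: ((fun y => y + 1) @: (rho @: A)).
  apply/subsetP => x xR; rewrite inE.
  have xA : AS x \in A by apply/imsetP; exists x.
  have [y [yR yx ry]] : exists y, [/\ y \in R, AS y = AS x & rho (AS x) = y].
    rewrite /rho; case: pickP => [y /andP[yR /eqP yx]|/(_ x)]; last by rewrite xR eqxx.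
    by exists y.
  have yA : y \in rho @: A by rewrite -ry; apply/imsetP; exists (AS x).
  have [xy|xy] := AS_eq yx.
    by rewrite xy yA.
  by apply/orP; right; apply/imsetP; exists y.
have cR : (#|R| <= #|A| + #|A|)%N.
  apply: (leq_trans (subset_leq_card RS)); apply: (leq_trans (leq_card_setU _ _)).
  by apply: leq_add; [|apply: (leq_trans (leq_imset_card _ _))]; apply: leq_imset_card.
have cB : #|B| = #|A| by apply: card_imset; exact: addIr.
have eR : A :|: B = R.
  apply/eqP; rewrite eqEcard subUset AR BR /= cardsU.
  by rewrite (disjoint_setI0 dAB) cards0 subn0 cB.
have : mu \in A :|: B by rewrite eR inE Hmu.
case/setUP => [/imsetP [x _ ->]|/imsetP [a /imsetP [x _ ->] ->]]; first by exists x.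
by exists (x + w); rewrite ASD ASw.
Qed.


Definition Tg := g + cj g.

Lemma cjTg : cj Tg = Tg.
Proof. by rewrite /Tg cjD cjK addrC. Qed.

Lemma aniso (x y : F) : cj x = x -> cj y = y -> (x != 0) || (y != 0) ->
  1 * x ^+ 2 + 1 * x * y + Tg ^+ 2 * y ^+ 2 != 0.
Proof.
move=> xR yR nz; apply/negP => /eqP E.
have [y0|y0] := eqVneq y 0.
  move: nz E; rewrite y0 eqxx orbF => x0.
  rewrite expr0n /= !mulr0 !addr0 mul1r => /eqP; rewrite expf_eq0 /=.
  by rewrite (negPf x0).
pose s := x / y.
have sR : cj s = s by rewrite /s cjB xR yR.
have Es : s ^+ 2 + s + Tg ^+ 2 = 0.
  have -> : s ^+ 2 + s + Tg ^+ 2 = (1 * x ^+ 2 + 1 * x * y + Tg ^+ 2 * y ^+ 2) / y ^+ 2.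
    by rewrite /s; field.
  by rewrite E mul0r.
pose w0 := s + Tg.
have w0R : cj w0 = w0 by rewrite /w0 cjD sR cjTg.
pose mu := g + Tg * w + w0 ^+ 2 * (w * cj w).
have muR : cj mu = mu.
  rewrite /mu /w0 /s /Tg !(cjD, cjM, cjX, cjV, cjK, xR, yR).
  apply: (c2eq (z := cj g - g * w - cj g * w)); rewrite cjw; ring.
have [r0 Hr0] := AS_Fq muR.
pose r := r0 + w0 * w.
have := Hg r; rewrite /r.
have -> : (r0 + w0 * w) ^+ 2 + (r0 + w0 * w) + g
  = (AS r0 - mu) + w * (s ^+ 2 + s + Tg ^+ 2)
    + 2%:R * (g + w * Tg + w * s * Tg + r0 * w0 * w).
  by rewrite /AS /mu /w0 cjw; ring.
by rewrite Hr0 subrr Es mulr0 two0 mul0r !addr0 eqxx.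
Qed.

Definition cc := g * cj w + cj g * w.
Definition tt := cc ^+ 2.

Definition Urows : seq (seq F) :=
  [:: [:: 1; tt; w; 0];
      [:: 1; tt; cj w; 0];
      [:: - 2%:R; - (2%:R * tt + cc); - 1; - Tg];
      [:: 0; w; 0; 1];
      [:: 0; cj w; 0; 1];
      [:: 0; 0; 0; 0]].

Definition Umat : 'M[F]_(6,4) := \matrix_(i < 6, j < 4) nth 0 (nth [::] Urows i) j.

Definition ee1 (l0 l1 l2 l3 : F) := l0 + l1 * tt + l2 * w.
Definition ee2 (l0 l1 l2 l3 : F) := l0 + l1 * tt + l2 * cj w.
Definition ee3 (l0 l1 l2 l3 : F) := - (2%:R * l0 + (2%:R * tt + cc) * l1 + l2 + Tg * l3).
Definition ee4 (l0 l1 l2 l3 : F) := l1 * w + l3.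
Definition ee5 (l0 l1 l2 l3 : F) := l1 * cj w + l3.

Lemma U_mul (lam : 'cV[F]_4) :
  let l0 := lam 0 0 in let l1 := lam 1 0 in let l2 := lam 2 0 in let l3 := lam 3 0 in
  Umat *m lam = mk6 (ee1 l0 l1 l2 l3) (ee2 l0 l1 l2 l3) (ee3 l0 l1 l2 l3)
                    (ee4 l0 l1 l2 l3) (ee5 l0 l1 l2 l3) 0.
Proof.
move=> l0 l1 l2 l3.
have E1 : lift ord0 (ord0 : 'I_3) = 1 :> 'I_4 by apply: val_inj.
have E2 : lift ord0 (lift ord0 (ord0 : 'I_2)) = 2 :> 'I_4 by apply: val_inj.
have E3 : lift ord0 (lift ord0 (lift ord0 (ord0 : 'I_1))) = 3 :> 'I_4 by apply: val_inj.
apply/matrixP=> i j; rewrite ord1 !mxE !big_ord_recl big_ord0 /= !mxE /= E1 E2 E3 -/l1 -/l2 -/l3.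
rewrite -[ord0 in lam ord0 _]/(0 : 'I_4) -/l0.
case: i => [[|[|[|[|[|[|//]]]]]] Hi] /=; rewrite /ee1 /ee2 /ee3 /ee4 /ee5; ring.
Qed.

Lemma cjX2 (x : F) : cj (x ^+ 2) = (cj x) ^+ 2.
Proof. exact: cjX. Qed.

Lemma hformS (a d b : F) :
  hform q w (Sgamma q w g) (mk6 a (cj a) d b (cj b) 0) =
  cj d + (a + cj a) + (g * cj b + cj g * b).
Proof.
have Hn := w_neq0; have Hn' := omw_neq0.
rewrite Sg_mk6 hform_mk6 cj0 !cjK cjw; field.
all: by rewrite ?Hn ?Hn'.
Qed.

Lemma hform_scale (X Y : 'cV[F]_6) k : hform q w X (k *: Y) = cj k * hform q w X Y.
Proof.
rewrite (mk6_crd X) (mk6_crd Y) scale_mk6 !hform_mk6 !cjM; ring.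
Qed.

Lemma cjcc : cj cc = cc.
Proof. by rewrite /cc !(cjD, cjM) !cjK addrC. Qed.
Lemma cjtt : cj tt = tt.
Proof. by rewrite /tt cjX cjcc. Qed.

Lemma D_neq0 : w - cj w != 0.
Proof. by rewrite subr_eq0 eq_sym. Qed.

Lemma lam_all (lam : 'cV[F]_4) (P : F -> Prop) :
  P (lam 0 0) -> P (lam 1 0) -> P (lam 2 0) -> P (lam 3 0) -> forall i, P (lam i 0).
Proof.
move=> h0 h1 h2 h3 i; case: i => [[|[|[|[|//]]]] Hi].
- by rewrite (_ : Ordinal Hi = 0) //; apply: val_inj.
- by rewrite (_ : Ordinal Hi = 1) //; apply: val_inj.
- by rewrite (_ : Ordinal Hi = 2) //; apply: val_inj.
- by rewrite (_ : Ordinal Hi = 3) //; apply: val_inj.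
Qed.

Lemma U_indep (lam : 'cV[F]_4) : Umat *m lam = 0 -> lam = 0.
Proof.
rewrite U_mul -mk6_0 => /mk6_inj [E1 [E2 [_ [E4 [E5 _]]]]].
move: E1 E2 E4 E5; rewrite /ee1 /ee2 /ee4 /ee5.
set l0 := lam 0 0; set l1 := lam 1 0; set l2 := lam 2 0; set l3 := lam 3 0.
move=> E1 E2 E4 E5.
have H1 : l1 = 0.
  have : l1 * (w - cj w) = 0 by rewrite mulrBr -[LHS]addr0 -{1}E5 -E4; ring.
  by move/eqP; rewrite mulf_eq0 (negPf D_neq0) orbF => /eqP.
have H3 : l3 = 0 by move: E4; rewrite H1 mul0r add0r.
have H2 : l2 = 0.
  have : l2 * (w - cj w) = 0.
    by rewrite mulrBr -[LHS]addr0 -{1}E2 -E1 H1; ring.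
  by move/eqP; rewrite mulf_eq0 (negPf D_neq0) orbF => /eqP.
have H0 : l0 = 0 by move: E1; rewrite H1 H2 !mul0r !addr0.
apply/matrixP => i j; rewrite ord1 mxE; move: i; exact: (lam_all (P := fun x => x = 0)).
Qed.

Lemma FqVecP (lam : 'cV[F]_4) : FqVec q lam -> forall i, cj (lam i 0) = lam i 0.
Proof.
rewrite /FqVec => /forallP H i.
have := H i.
rewrite /inFq.
move/eqP.
exact.
Qed.

Lemma solid_back (lam : 'cV[F]_4) k : FqVec q lam -> lam != 0 -> k != 0 ->
  inPi q (k *: (Umat *m lam)) /\ inPerp q w (Sgamma q w g) (k *: (Umat *m lam)).
Proof.
move=> Fl nz k0.
have cl := FqVecP Fl.
have Ul0 : Umat *m lam != 0 by apply: contraNneq nz => /U_indep ->; rewrite eqxx.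
have Ueq : Umat *m lam = mk6 (ee1 (lam 0 0) (lam 1 0) (lam 2 0) (lam 3 0))
     (cj (ee1 (lam 0 0) (lam 1 0) (lam 2 0) (lam 3 0)))
     (ee3 (lam 0 0) (lam 1 0) (lam 2 0) (lam 3 0))
     (ee4 (lam 0 0) (lam 1 0) (lam 2 0) (lam 3 0))
     (cj (ee4 (lam 0 0) (lam 1 0) (lam 2 0) (lam 3 0))) 0.
  rewrite U_mul; apply: mk6_eq => //.
    by rewrite /ee1 /ee2 /tt !(cjD, cjM, cjX2) !cl ?cjK /cc; ring.
  by rewrite /ee4 /ee5 !(cjD, cjM) !cl.
have c3 : cj (ee3 (lam 0 0) (lam 1 0) (lam 2 0) (lam 3 0)) = ee3 (lam 0 0) (lam 1 0) (lam 2 0) (lam 3 0).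
  by rewrite /ee3 /tt !(cjN, cjD, cjM, cjn, cjX2) !cl ?cjK /cc /Tg; ring.
have sig : inSigma q (k *: (Umat *m lam)).
  split; first by rewrite scaler_eq0 negb_or k0.
  exists k^-1; split; first by rewrite invr_eq0.
  rewrite scalerA mulVf // scale1r Ueq inV_mk6 c3 cj0 !eqxx.
  done.
split; split => //.
  by rewrite Ueq scale_mk6 crd_mk6 //= mulr0.
rewrite hform_scale Ueq hformS c3.
have Hn := w_neq0.
apply/eqP; rewrite mulf_eq0; apply/orP; right; apply/eqP.
rewrite /ee1 /ee3 /ee4 /tt !(cjD, cjM, cjX2) !cl ?cjK /cc /Tg cjw; ring.
Qed.

Lemma ee3E l0 l1 l2 l3 :
  ee3 l0 l1 l2 l3 = - ((ee1 l0 l1 l2 l3 + ee2 l0 l1 l2 l3)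
                       + (g * ee5 l0 l1 l2 l3 + cj g * ee4 l0 l1 l2 l3)).
Proof. by rewrite /ee1 /ee2 /ee3 /ee4 /ee5 /cc /Tg cjw; ring. Qed.

Lemma solid_forw (v : 'cV[F]_6) : inPi q v -> inPerp q w (Sgamma q w g) v ->
  exists lam, [/\ FqVec q lam, lam != 0 & exists k, k != 0 /\ v = k *: (Umat *m lam)].
Proof.
move=> [[vnz [k [k0 Vk]]] v6] [_ hS].
pose u := k *: v.
have u6 : crd u 6 = 0 by rewrite /u /crd mxE -/(crd v 6) v6 mulr0.
have hu : hform q w (Sgamma q w g) u = 0 by rewrite hform_scale hS mulr0.
move: Vk; rewrite -/u (mk6_crd u) inV_mk6 u6 => /and4P [/eqP e2 /eqP e5 /eqP e3 _].
set a := crd u 1 in e2 *; set d := crd u 3 in e3 *; set b := crd u 4 in e5 *.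
have uE : u = mk6 a (cj a) d b (cj b) 0 by rewrite {1}(mk6_crd u) e2 e5 u6.
move: hu; rewrite uE hformS e3 => hd.
have dE : d = - ((a + cj a) + (g * cj b + cj g * b)) by rewrite -[d]subr0 -hd; ring.
have HD := D_neq0.
have HD' : cj w - w != 0 by rewrite subr_eq0.
pose l1 := (b - cj b) / (w - cj w).
pose l3 := b - l1 * w.
pose a' := a - l1 * tt.
pose l2 := (a' - cj a') / (w - cj w).
pose l0 := a' - l2 * w.
pose lam : 'cV[F]_4 := \col_(i < 4) nth 0 [:: l0; l1; l2; l3] i.
have L0 : lam 0 0 = l0 by rewrite !mxE.
have L1 : lam 1 0 = l1 by rewrite !mxE.
have L2 : lam 2 0 = l2 by rewrite !mxE.
have L3 : lam 3 0 = l3 by rewrite !mxE.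
have c1 : cj l1 = l1.
  by rewrite /l1 !(cjB, cjD, cjN) !cjK; field; rewrite ?HD ?HD'.
have c3 : cj l3 = l3 by rewrite /l3 cjD cjN cjM c1 /l1; field; rewrite ?HD ?HD'.
have ca' : cj a' = cj a - l1 * tt by rewrite /a' cjD cjN cjM c1 cjtt.
have c2 : cj l2 = l2.
  by rewrite /l2 cjB (cjD a') (cjD w) !cjN !cjK ca'; field; rewrite ?HD ?HD'.
have c0 : cj l0 = l0.
  by rewrite /l0 cjD cjN cjM c2 /l2; field; rewrite ?HD ?HD'.
have Ulam : u = Umat *m lam.
  rewrite U_mul L0 L1 L2 L3 uE.
  have E1 : a = ee1 l0 l1 l2 l3 by rewrite /ee1 /l0 /a'; ring.
  have E2 : cj a = ee2 l0 l1 l2 l3.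
    by rewrite /ee2 /l0 /l2 ca' /a'; field; rewrite ?HD ?HD'.
  have E4 : b = ee4 l0 l1 l2 l3 by rewrite /ee4 /l3; ring.
  have E5 : cj b = ee5 l0 l1 l2 l3 by rewrite /ee5 /l3 /l1; field; rewrite ?HD ?HD'.
  by apply: mk6_eq => //; rewrite dE ee3E -E1 -E2 -E4 -E5.
exists lam; split.
- apply/forallP => i; rewrite /inFq; apply/eqP; move: i.
  by apply: (lam_all (P := fun x => cj x = x)); rewrite ?L0 ?L1 ?L2 ?L3.
- apply/eqP => l0z; have unz : u != 0 by rewrite /u scaler_eq0 negb_or k0.
  by move: unz; rewrite Ulam l0z mulmx0 eqxx.
- exists k^-1; split; first by rewrite invr_eq0.
  by rewrite -Ulam /u scalerA mulVf // scale1r.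
Qed.

Lemma quadE (lam : 'cV[F]_4) :
  crd (Umat *m lam) 3 ^+ 2 + crd (Umat *m lam) 1 * crd (Umat *m lam) 5
  + crd (Umat *m lam) 2 * crd (Umat *m lam) 4 =
  lam 0 0 * lam 1 0 + 1 * lam 2 0 ^+ 2 + 1 * lam 2 0 * lam 3 0 + Tg ^+ 2 * lam 3 0 ^+ 2.
Proof.
rewrite U_mul !crd_mk6 //=.
move: (lam 0 0) (lam 1 0) (lam 2 0) (lam 3 0) => l0 l1 l2 l3.
rewrite /ee1 /ee2 /ee3 /ee4 /ee5 /tt /cc /Tg cjw.
move: (cj g) => G.
apply: (c2eq (z := (2%:R * l0 ^+ 2 + 4%:R * g ^+ 2 * l0 * l1 - 8%:R * g ^+ 2 * l0 * l1 * w + 8%:R * G * g * l0 * l1 * w + 4%:R * g ^+ 2 * l0 * l1 * w ^+ 2 - 8%:R * G * g * l0 * l1 * w ^+ 2 + 4%:R * G ^+ 2 * l0 * l1 * w ^+ 2 + 2%:R * g * l0 * l1 - 2%:R * g * l0 * l1 * w + 2%:R * G * l0 * l1 * w + 2%:R * l0 * l2 + 2%:R * g * l0 * l3 + 2%:R * G * l0 * l3 + 2%:R * g ^+ 4 * l1 ^+ 2 - 8%:R * g ^+ 4 * l1 ^+ 2 * w + 8%:R * G * g ^+ 3 * l1 ^+ 2 * w + 12%:R * g ^+ 4 * l1 ^+ 2 * w ^+ 2 - 24%:R * G * g ^+ 3 * l1 ^+ 2 * w ^+ 2 + 12%:R * G ^+ 2 * g ^+ 2 * l1 ^+ 2 *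 w ^+ 2 + 2%:R * g ^+ 3 * l1 ^+ 2 - 6%:R * g ^+ 3 * l1 ^+ 2 * w + 6%:R * G * g ^+ 2 * l1 ^+ 2 * w + 2%:R * g ^+ 2 * l1 * l2 + 2%:R * g ^+ 3 * l1 * l3 + 2%:R * G * g ^+ 2 * l1 * l3 - 8%:R * g ^+ 4 * l1 ^+ 2 * w ^+ 3 + 24%:R * G * g ^+ 3 * l1 ^+ 2 * w ^+ 3 - 24%:R * G ^+ 2 * g ^+ 2 * l1 ^+ 2 * w ^+ 3 + 6%:R * g ^+ 3 * l1 ^+ 2 * w ^+ 2 - 12%:R * G * g ^+ 2 * l1 ^+ 2 * w ^+ 2 - 4%:R * g ^+ 2 * l1 * l2 * w - 4%:R * g ^+ 3 * l1 * l3 * w + 8%:R * G ^+ 3 * g * l1 ^+ 2 * w ^+ 3 + 6%:R * G ^+ 2 * g * l1 ^+ 2 * w ^+ 2 + 4%:R * G * g * l1 * l2 * w + 4%:R * G ^+ 2 * g * l1 * l3 * w + 2%:R * g ^+ 4 * l1 ^+ 2 * w ^+ 4 - 8%:R * G * g ^+ 3 * l1 ^+ 2 * w ^+ 4 + 12%:R * G ^+ 2 * g ^+ 2 * l1 ^+ 2 * w ^+ 4 - 2%:R * g ^+ 3 * l1 ^+ 2 * w ^+ 3 + 6%:R * G * g ^+ 2 * l1 ^+ 2 * w ^+ 3 + 2%:R * g ^+ 2 * l1 * l2 * w ^+ 2 + 2%:R * g ^+ 3 * l1 * l3 * w ^+ 2 - 2%:R * G * g ^+ 2 * l1 * l3 *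 w ^+ 2 - 8%:R * G ^+ 3 * g * l1 ^+ 2 * w ^+ 4 - 6%:R * G ^+ 2 * g * l1 ^+ 2 * w ^+ 3 - 4%:R * G * g * l1 * l2 * w ^+ 2 - 2%:R * G ^+ 2 * g * l1 * l3 * w ^+ 2 + 2%:R * G ^+ 4 * l1 ^+ 2 * w ^+ 4 + 2%:R * G ^+ 3 * l1 ^+ 2 * w ^+ 3 + 2%:R * G ^+ 2 * l1 * l2 * w ^+ 2 + 2%:R * G ^+ 3 * l1 * l3 * w ^+ 2 + g ^+ 2 * l1 ^+ 2 - 2%:R * g ^+ 2 * l1 ^+ 2 * w + 2%:R * G * g * l1 ^+ 2 * w + g * l1 * l2 + 2%:R * g ^+ 2 * l1 * l3 + G * g * l1 * l3 + g ^+ 2 * l1 ^+ 2 * w ^+ 2 - 2%:R * G * g * l1 ^+ 2 * w ^+ 2 - g * l1 * l2 * w - 3%:R * g ^+ 2 * l1 * l3 * w + G ^+ 2 * l1 ^+ 2 * w ^+ 2 + G * l1 * l2 * w + G ^+ 2 * l1 * l3 * w + g * l2 * l3 + G * l2 * l3 + l0 * l3 + 2%:R * G * g * l1 * l3 * w + g ^+ 2 * l1 * l3 * w ^+ 2 - 2%:R * G * g * l1 * l3 * w ^+ 2 + G ^+ 2 * l1 * l3 * w ^+ 2 + l1 * l2 * w - l1 * l2 * w ^+ 2))); ring.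
Qed.

Lemma inV_Ulam (lam : 'cV[F]_4) : FqVec q lam -> inV q (Umat *m lam).
Proof.
move=> Fl; have := FqVecP Fl => cl.
rewrite U_mul inV_mk6 cj0 eqxx andbT.
apply/and3P; split; apply/eqP.
- by rewrite /ee1 /ee2 /tt !(cjD, cjM, cjX2) !cl ?cjK /cc; ring.
- by rewrite /ee4 /ee5 !(cjD, cjM) !cl.
- by rewrite /ee3 /tt !(cjN, cjD, cjM, cjn, cjX2) !cl ?cjK /cc /Tg; ring.
Qed.

Lemma main_sec :
  let S := Sgamma q w g in
  (exists U : 'M[F]_(6,4),
     is_solid_of_Sigma q (fun v => inPi q v /\ inPerp q w S v) U /\
     is_elliptic_quadric_in q U
       (fun v => inQ q v /\ inPerp q w S v)) /\
  #|[set m in Gset q w | ppt (m *m S) == ppt S]| = (q ^ 2 + 1)%N /\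
  #|[set ppt (m *m S) | m in Gset q w]| = (q ^ 2 * (q ^ 2 - 1))%N.
Proof.
move=> S; split; last by split; [exact: card_St | exact: card_Orb].
exists Umat; split.
  split.
    split.
      move=> j; rewrite colE; apply: inV_Ulam.
      apply/forallP => i; rewrite /inFq !mxE; apply/eqP; exact: cjn.
    by move=> lam _ /U_indep.
  move=> v; split.
    by case=> Hpi Hpe; apply: solid_forw.
  by case=> lam [Fl nz [k [k0 ->]]]; apply: solid_back.
exists 1, 1, (Tg ^+ 2); split.
- by rewrite /inFq cj1.
- by rewrite /inFq cj1.
- by rewrite /inFq cjX2 cjTg.
- by move=> x y /eqP xR /eqP yR nz; apply: aniso.
move=> lam Fl nz; split.
  by case=> [[_ E] _]; rewrite -quadE.
move=> E; have [Pi Pe] := solid_back (k := 1) Fl nz (oner_neq0 _).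
rewrite scale1r in Pi Pe; split => //; split => //.
by rewrite quadE.
Qed.
End Main.


Unset Implicit Arguments.

Theorem mainTheorem11 (h : nat) (q : nat) (F : finFieldType) (w gam : F) :
  (0 < h)%N -> q = (2 ^ h)%N -> #|F| = (q ^ 2)%N ->
  ~~ inFq q w -> w + w ^+ q = 1 ->
  (forall x : F, x ^+ 2 + x + gam != 0) ->
  let S := Sgamma q w gam in
  (exists U : 'M[F]_(6,4),
     is_solid_of_Sigma q (fun v => inPi q v /\ inPerp q w S v) U /\
     is_elliptic_quadric_in q U
       (fun v => inQ q v /\ inPerp q w S v)) /\
  #|[set g in Gset q w | ppt (g *m S) == ppt S]| = (q ^ 2 + 1)%N /\
  #|[set ppt (g *m S) | g in Gset q w]| = (q ^ 2 * (q ^ 2 - 1))%N.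
Proof.
move=> h0 qE Hcard Hwq Hw Hg.
have pchar2 : (2%N \in [pchar F]).
  apply: (@card_finPcharP _ 2 (h * 2)) => //.
  by rewrite Hcard qE -expnM.
have qnat : (GRing.pchar F).-nat q.
  by rewrite qE pnatX (pnatE _ (isT : prime 2)) pchar2.
exact: (main_sec pchar2 qnat Hcard Hw Hwq Hg).
Qed.
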